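(* Let $u$ be a $\rho,\lambda$-Catalan word and $v$ a $\lambda,\mu$-Catalan word. Then for every configuration of the two-stacks-in-series machine from which $uv$ can be applied, $vu$ can also be applied, and applying $uv$ and applying $vu$ yield the same configuration (same remaining input, same contents of both stacks, same output). In particular, if $u$ and $v$ are nonempty, then $uv$ is a forbidden word.
   Context: Two stacks in series: a machine with an input stream, a first stack, a second stack and an output stream, with three moves: $\rho$ moves the next element of the input onto the top of the first stack; $\lambda$ moves the top element of the first stack onto the top of the second stack; $\mu$ moves the top element of the second stack to the end of the output. A word over $\{\rho,\lambda,\mu\}$ acts on configurations by performing the moves left to right (a move can only be applied if the relevant source is nonempty). For letters $x,y$, an $x,y$-Catalan word is a word over $\{x,y\}$ with equally many $x$'s and $y$'s such that every prefix contains at least as many $x$'s as $y$'s. Order the letters by $\rho<\lambda<\mu$ and compare words lexicographically; a word $w$ over $\{\rho,\lambda,\mu\}$ is forbidden if there is another word $w'$ with $w'>w$ that has the same effect on the machine as $w$. *)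

(* Defs.v *)
From mathcomp Require Import all_boot.
Set Implicit Arguments. Unset Strict Implicit. Unset Printing Implicit Defensive.

Inductive move := Rho | Lam | Mu.

(* The next input element is the head of the input list; the top of each
   stack is the head of its list; the output is read left to right, new
   elements are appended at the end. *)
Record config (T : Type) := Config {
  cin : seq T; cst1 : seq T; cst2 : seq T; cout : seq T }.

Definition step {T : Type} (m : move) (c : config T) : option (config T) :=
  match m, c with
  | Rho, Config (x :: i) s1 s2 o => Some (Config i (x :: s1) s2 o)
  | Lam, Config i (x :: s1) s2 o => Some (Config i s1 (x :: s2) o)
  | Mu,  Config i s1 (x :: s2) o => Some (Config i s1 s2 (rcons o x))
  | _, _ => None
  end.

Fixpoint run {T : Type} (w : seq move) (c : config T) : option (config T) :=
  match w with
  | [::] => Some c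
  | m :: w' => match step m c with
               | Some c' => run w' c'
               | None => None
               end
  end.

Definition is_move (a : move) (m : move) : bool :=
  match a, m with
  | Rho, Rho | Lam, Lam | Mu, Mu => true
  | _, _ => false
  end.

Definition cnt (a : move) (w : seq move) : nat := count (is_move a) w.

Definition catalan (x y : move) (w : seq move) : Prop :=
  all (fun m => is_move x m || is_move y m) w /\
  cnt x w = cnt y w /\
  forall k, cnt y (take k w) <= cnt x (take k w).

Definition rank (m : move) : nat :=
  match m with Rho => 0 | Lam => 1 | Mu => 2 end.

Fixpoint lex_lt (w w' : seq move) : bool :=
  match w, w' with
  | [::], _ :: _ => true
  | _, [::] => false
  | a :: u, b :: u' =>
      (rank a < rank b) || ((rank a == rank b) && lex_lt u u')
  end.

Definition same_effect (w w' : seq move) : Prop :=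
  forall c : config nat, run w c = run w' c.

Definition forbidden (w : seq move) : Prop :=
  exists w', lex_lt w w' /\ same_effect w' w.

(* Main.v *)
Require Import Defs.
From mathcomp Require Import all_boot.
From mathcomp Require Import zify.
Set Implicit Arguments.

Lemma run_cat T (w1 w2 : seq move) (c : config T) :
  run (w1 ++ w2) c = match run w1 c with Some c' => run w2 c' | None => None end.
Proof.
elim: w1 c => [|m w IH] c //=.
by case: (step m c).
Qed.

Lemma can_run T (w : seq move) (c : config T) :
 (forall k, cnt Lam (take k w) <= size (cst1 c) + cnt Rho (take k w)) ->
 (forall k, cnt Mu (take k w) <= size (cst2 c) + cnt Lam (take k w)) ->
 (forall k, cnt Rho (take k w) <= size (cin c)) ->
 exists c', run w c = Some c'.
Proof.
elim: w c => [|m w IH] [i s1 s2 o] /= H1 H2 H3; first by eauto.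
case: m H1 H2 H3 => H1 H2 H3.
- case: i H3 => [|x i] H3; first by have := H3 1; rewrite /cnt /= take0.
  apply: IH => k /=.
  + have := H1 k.+1; rewrite /cnt /=; lia.
  + have := H2 k.+1; rewrite /cnt /=; lia.
  + have := H3 k.+1; rewrite /cnt /=; lia.
- case: s1 H1 => [|x s1] H1; first by have := H1 1; rewrite /cnt /= take0.
  apply: IH => k /=.
  + have := H1 k.+1; rewrite /cnt /=; lia.
  + have := H2 k.+1; rewrite /cnt /=; lia.
  + have := H3 k.+1; rewrite /cnt /=; lia.
- case: s2 H2 => [|x s2] H2; first by have := H2 1; rewrite /cnt /= take0.
  apply: IH => k /=.
  + have := H1 k.+1; rewrite /cnt /=; lia.
  + have := H2 k.+1; rewrite /cnt /=; lia.
  + have := H3 k.+1; rewrite /cnt /=; lia.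
Qed.

Lemma conserv T (w : seq move) (c c' : config T) : run w c = Some c' ->
  size (cin c') + cnt Rho w = size (cin c) /\
  size (cst1 c') + cnt Lam w = size (cst1 c) + cnt Rho w /\
  size (cst2 c') + cnt Mu w = size (cst2 c) + cnt Lam w /\
  size (cout c') = size (cout c) + cnt Mu w.
Proof.
elim: w c => [|m w IH] [i s1 s2 o] /=.
  by case=> <- /=; rewrite /cnt /=; lia.
case: m.
- case: i => [|x i] //= /IH /=; rewrite /cnt /=; lia.
- case: s1 => [|x s1] //= /IH /=; rewrite /cnt /=; lia.
- case: s2 => [|x s2] //= /IH /=; rewrite /cnt /= size_rcons; lia.
Qed.

Arguments conserv {T w c c'}.

Lemma frame T (w : seq move) i s1 s2 o i' s1' s2' o' (a b d p : seq T) :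
  run w (Config i s1 s2 o) = Some (Config i' s1' s2' o') ->
  run w (Config (i ++ a) (s1 ++ b) (s2 ++ d) (p ++ o)) =
    Some (Config (i' ++ a) (s1' ++ b) (s2' ++ d) (p ++ o')).
Proof.
elim: w i s1 s2 o => [|m w IH] i s1 s2 o /=.
  by case=> -> -> -> ->.
case: m.
- by case: i => [|x i] //= /IH.
- by case: s1 => [|x s1] //= /IH.
- by case: s2 => [|x s2] //= /IH; rewrite rcons_cat.
Qed.

Arguments frame {T w i s1 s2 o i' s1' s2' o'}.

Lemma cnt_take a k (w : seq move) : cnt a (take k w) <= cnt a w.
Proof.
by rewrite -{2}(cat_take_drop k w) /cnt count_cat leq_addr.
Qed.

Lemma cnt0 a (w : seq move) : all (fun m => ~~ is_move a m) w -> cnt a w = 0.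
Proof. by move=> H; rewrite /cnt; apply/eqP; rewrite -leqn0 leqNgt -has_count -all_predC. Qed.

Lemma comm_eq T (u v : seq move) (c : config T) :
  catalan Rho Lam u -> catalan Lam Mu v ->
  run (u ++ v) c = run (v ++ u) c.
Proof.
move=> [Au [Eu Pu]] [Av [Ev Pv]].
have u0 : cnt Mu u = 0 by apply: cnt0; apply: sub_all Au; case.
have v0 : cnt Rho v = 0 by apply: cnt0; apply: sub_all Av; case.
case: c => i s1 s2 o.
rewrite !run_cat.
case: (leqP (cnt Rho u) (size i)) => Hi; last first.
  have Nu : forall c : config T, size (cin c) = size i -> run u c = None.
    move=> c Hc; case E: (run u c) => [c'|] //.
    have [h _] := conserv E; lia.
  rewrite Nu //.
  case E: (run v _) => [c'|] //.
  by rewrite Nu //; have [h _] := conserv E; move: h; rewrite v0 /=; lia.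
case: (leqP (cnt Lam v) (size s1)) => Hs; last first.
  have Nv : forall c : config T, size (cst1 c) = size s1 -> run v c = None.
    move=> c Hc; case E: (run v c) => [c'|] //.
    have [_ [h _]] := conserv E; lia.
  rewrite Nv //.
  case E: (run u _) => [c'|] //.
  by rewrite Nv //; have [_ [h _]] := conserv E; move: h => /=; lia.
have [ru Hru] : exists c', run u (Config (take (cnt Rho u) i) [::] [::] [::]) = Some c'.
  apply: can_run.
- by move=> k /=.
- by move=> k /=; have := cnt_take Mu k u; lia.
- by move=> k /=; rewrite size_take_min; have := cnt_take Rho k u; lia.
have [rv Hrv] : exists c', run v (Config [::] (take (cnt Lam v) s1) [::] [::] : config T) = Some c'.
  apply: can_run.
- by move=> k /=; rewrite size_take_min; have := cnt_take Lam k v; lia.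
- by move=> k /=.
- by move=> k /=; have := cnt_take Rho k v; lia.
case: ru Hru => ui us1 us2 uo Hru.
have [h1 [h2 [h3 h4]]] := conserv Hru; move: h1 h2 h3 h4 => /=.
rewrite size_take_min (minn_idPl Hi) u0 -Eu => h1 h2 h3 h4.
case: ui Hru h1 => [|? ?] Hru h1; last by move: h1 => /=; lia.
case: us1 Hru h2 => [|? ?] Hru h2; last by move: h2 => /=; lia.
case: uo Hru h4 => [|? ?] Hru h4; last by move: h4 => /=; lia.
case: rv Hrv => vi vs1 vs2 vo Hrv.
have [g1 [g2 [g3 g4]]] := conserv Hrv; move: g1 g2 g3 g4 => /=.
rewrite size_take_min (minn_idPl Hs) v0 -Ev => g1 g2 g3 g4.
case: vi Hrv g1 => [|? ?] Hrv g1; last by move: g1 => /=; lia.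
case: vs1 Hrv g2 => [|? ?] Hrv g2; last by move: g2 => /=; lia.
case: vs2 Hrv g3 => [|? ?] Hrv g3; last by move: g3 => /=; lia.
have Fu := frame (drop (cnt Rho u) i) s1 s2 o Hru.
have Fv := frame i (drop (cnt Lam v) s1) s2 o Hrv.
rewrite /= ?cat0s ?cats0 ?cat_take_drop in Fu Fv.
rewrite Fu Fv.
have Fv' := frame (drop (cnt Rho u) i) (drop (cnt Lam v) s1) (us2 ++ s2) o Hrv.
have Fu' := frame (drop (cnt Rho u) i) (drop (cnt Lam v) s1) s2 (o ++ vo) Hru.
rewrite /= ?cat0s ?cats0 ?cat_take_drop in Fu' Fv'.
by rewrite Fv' Fu'.
Qed.

Theorem mainTheorem3 (u v : seq move) :
  catalan Rho Lam u -> catalan Lam Mu v ->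
  (forall (T : Type) (c c' : config T),
      run (u ++ v) c = Some c' -> run (v ++ u) c = Some c') /\
  (0 < size u -> 0 < size v -> forbidden (u ++ v)).
Proof.
move=> Cu Cv; split.
  by move=> T c c'; rewrite (comm_eq c Cu Cv).
move=> su sv; exists (v ++ u); split; last by move=> c; rewrite (comm_eq c Cu Cv).
move: Cu Cv su sv => [Au [_ Pu]] [Av [_ Pv]].
case: u Au Pu => [|a u] // /andP[Ha _] Pu _.
case: v Av Pv => [|b v] // /andP[Hb _] Pv _.
have Ea : a = Rho.
  by move: (Pu 1) Ha; clear; rewrite /cnt /= take0; case: a.
have Eb : b = Lam.
  by move: (Pv 1) Hb; clear; rewrite /cnt /= take0; case: b.
rewrite Ea Eb cat_cons cat_cons.
exact: isT.
Qed.
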